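(* Let $H$ be a finite-dimensional real Hilbert space, $C\subseteq H$ nonempty, closed and convex, and $F:H\to H$ an operator such that (A1) $S_D\neq\emptyset$; (A2) $F$ is quasimonotone; (A3) $F$ is uniformly continuous on $H$; (A4) whenever $\{x_n\}\subset H$ and $x_n\rightharpoonup x$, one has $\|F(x)\|\le\liminf_{n\to\infty}\|F(x_n)\|$. Assume moreover that $F(z)\neq0$ for every $z\in S\setminus S_D$. Let $\{z_n\}$ be the sequence generated by Algorithm 3.1 (with $\epsilon=0$), and assume $z_n\neq w_n$ for all $n$. Then $\{z_n\}$ converges to a point $z^\ell\in S$.
   Context: $\rightharpoonup$ denotes weak convergence. $P_C$ denotes the metric projection onto $C$. $S$ is the solution set of the variational inequality: $x\in C$ with $\langle F(x),w-x\rangle\ge0$ for all $w\in C$. $S_D$ is the set of $z\in C$ with $\langle F(v),v-z\rangle\ge0$ for all $v\in C$. $F$ is quasimonotone if $\langle F(w),z-w\rangle>0$ implies $\langle F(z),z-w\rangle\ge0$ for all $w,z\in H$. Algorithm 3.1 (with $\epsilon=0$): fix $\mu\in(0,1)$, a sequence $\{\xi_n\}\subset[0,\infty)$ with $\sum_{n}\xi_n<\infty$, $z_1\in H$ and $\lambda_1>0$. For $n=1,2,\dots$: $w_n=P_C(z_n-\lambda_nF(z_n))$; $z_{n+1}=w_n+\lambda_n(F(z_n)-F(w_n))$; $\lambda_{n+1}=\min\{\frac{\mu\|z_n-w_n\|}{\|F(z_n)-F(w_n)\|},\lambda_n+\xi_n\}$ if $F(z_n)\neq F(w_n)$, and $\lambda_{n+1}=\lambda_n+\xi_n$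 otherwise. *)

(* Defs.v *)
(* The finite-dimensional real Hilbert space H is modelled as R^d = 'rV[R]_d
   with the Euclidean inner product (every finite-dimensional real Hilbert
   space is isometrically isomorphic to such a space). *)
From HB Require Import structures.
From mathcomp Require Import all_boot all_order all_algebra.
From mathcomp Require Import all_classical all_reals all_analysis.
Set Implicit Arguments. Unset Strict Implicit. Unset Printing Implicit Defensive.
Import Order.TTheory GRing.Theory Num.Theory numFieldNormedType.Exports.
Local Open Scope classical_set_scope.
Local Open Scope ring_scope.

Section Hilbert.
Variables (R : realType) (d : nat).
Notation H := 'rV[R]_d.

Definition dotp (u v : H) : R := (u *m v^T) 0 0.
Definition enorm (u : H) : R := Num.sqrt (dotp u u).

Definition convex_setH (C : set H) : Prop :=
  forall x y, C x -> C y -> forall t : R, 0 <= t <= 1 ->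
    C (t *: x + (1 - t) *: y).

Definition is_proj (C : set H) (x p : H) : Prop :=
  C p /\ forall w, C w -> enorm (x - p) <= enorm (x - w).

Definition VI_sol (C : set H) (F : H -> H) : set H :=
  [set x | C x /\ forall w, C w -> 0 <= dotp (F x) (w - x)].

Definition VI_dual_sol (C : set H) (F : H -> H) : set H :=
  [set z | C z /\ forall v, C v -> 0 <= dotp (F v) (v - z)].

Definition quasimonotone (F : H -> H) : Prop :=
  forall w z, 0 < dotp (F w) (z - w) -> 0 <= dotp (F z) (z - w).

Definition unif_continuousH (F : H -> H) : Prop :=
  forall eps : R, 0 < eps -> exists2 delta : R, 0 < delta &
    forall x y, enorm (x - y) < delta -> enorm (F x - F y) < eps.

Definition weak_cvg (x : nat -> H) (l : H) : Prop :=
  forall y : H, (fun n => dotp (x n) y) @ \oo --> dotp l y.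

Definition weak_lsc_norm (F : H -> H) : Prop :=
  forall (x : nat -> H) (l : H), weak_cvg x l ->
    ((enorm (F l))%:E <= limn_einf (fun n => (enorm (F (x n)))%:E))%E.

(* Algorithm 3.1 with epsilon = 0 (indices start at 0 instead of 1) *)
Definition alg31 (C : set H) (F : H -> H) (mu : R) (xi : nat -> R)
    (z w : nat -> H) (lam : nat -> R) : Prop :=
  forall n,
    is_proj C (z n - lam n *: F (z n)) (w n) /\
    z n.+1 = w n + lam n *: (F (z n) - F (w n)) /\
    lam n.+1 = (if F (z n) != F (w n)
                then Num.min (mu * enorm (z n - w n) / enorm (F (z n) - F (w n)))
                             (lam n + xi n)
                else lam n + xi n).

End Hilbert.

(* Main.v *)
Require Import Defs.
From HB Require Import structures.
From mathcomp Require Import all_boot all_order all_algebra.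
From mathcomp Require Import all_classical all_reals all_analysis.
From mathcomp Require Import ring lra.
Import Order.TTheory GRing.Theory Num.Theory numFieldNormedType.Exports.
Local Open Scope classical_set_scope.
Local Open Scope ring_scope.
Set Implicit Arguments. Unset Strict Implicit. Unset Printing Implicit Defensive.

Section Basics.
Variables (R : realType) (d : nat).
Implicit Types u v x y : 'rV[R]_d.

Lemma dotpE u v : dotp u v = \sum_i u 0 i * v 0 i.
Proof. by rewrite /dotp !mxE; apply: eq_bigr => i _; rewrite mxE. Qed.

Lemma dotpC u v : dotp u v = dotp v u.
Proof. by rewrite !dotpE; apply: eq_bigr => i _; rewrite mulrC. Qed.

Lemma dotpDl u v x : dotp (u + v) x = dotp u x + dotp v x.
Proof. by rewrite !dotpE -big_split; apply: eq_bigr => i _; rewrite mxE mulrDl. Qed.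

Lemma dotpDr u v x : dotp x (u + v) = dotp x u + dotp x v.
Proof. by rewrite !(dotpC x) dotpDl. Qed.

Lemma dotpZl (c : R) u v : dotp (c *: u) v = c * dotp u v.
Proof. by rewrite !dotpE mulr_sumr; apply: eq_bigr => i _; rewrite mxE mulrA. Qed.

Lemma dotpZr (c : R) u v : dotp v (c *: u) = c * dotp v u.
Proof. by rewrite !(dotpC v) dotpZl. Qed.

Lemma dotpNl u v : dotp (- u) v = - dotp u v.
Proof. by rewrite -scaleN1r dotpZl mulN1r. Qed.

Lemma dotpNr u v : dotp v (- u) = - dotp v u.
Proof. by rewrite !(dotpC v) dotpNl. Qed.

Lemma dotpBl u v x : dotp (u - v) x = dotp u x - dotp v x.
Proof. by rewrite dotpDl dotpNl. Qed.

Lemma dotpBr u v x : dotp x (u - v) = dotp x u - dotp x v.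
Proof. by rewrite dotpDr dotpNr. Qed.

Lemma dotp0l u : dotp 0 u = 0.
Proof. by rewrite dotpE big1 // => i _; rewrite mxE mul0r. Qed.

Lemma dotp0r u : dotp u 0 = 0.
Proof. by rewrite dotpC dotp0l. Qed.

Lemma dotp_ge0 u : 0 <= dotp u u.
Proof. by rewrite dotpE sumr_ge0 // => i _; rewrite -expr2 sqr_ge0. Qed.

Lemma coord_le u i : u 0 i ^+ 2 <= dotp u u.
Proof.
rewrite dotpE (bigD1 i) //= -expr2 lerDl sumr_ge0 // => j _.
by rewrite -expr2 sqr_ge0.
Qed.

Lemma dotp_eq0 u : dotp u u = 0 -> u = 0.
Proof.
move=> h; apply/rowP => i; rewrite mxE.
have := coord_le u i; rewrite h => hh.
by apply/eqP; rewrite -sqrf_eq0 eq_le hh sqr_ge0.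
Qed.

Lemma enorm_ge0 u : 0 <= enorm u.
Proof. exact: sqrtr_ge0. Qed.

Lemma enorm_sq u : enorm u ^+ 2 = dotp u u.
Proof. by rewrite /enorm sqr_sqrtr // dotp_ge0. Qed.

Lemma CS_sq u v : dotp u v ^+ 2 <= dotp u u * dotp v v.
Proof.
have [v0|vn0] := eqVneq v 0.
  by rewrite v0 !dotp0r expr0n /= mulr0.
have a0 : 0 < dotp v v.
  rewrite lt_def dotp_ge0 andbT; apply/negP => /eqP h.
  by move: vn0; rewrite (dotp_eq0 h) eqxx.
have := dotp_ge0 (dotp v v *: u - dotp u v *: v).
rewrite !(dotpBl, dotpBr, dotpZl, dotpZr) (dotpC v u) => h.
have : 0 <= dotp v v * (dotp u u * dotp v v - dotp u v ^+ 2) by nra.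
by rewrite pmulr_rge0 // subr_ge0.
Qed.

Lemma CS u v : `|dotp u v| <= enorm u * enorm v.
Proof.
rewrite /enorm -sqrtrM ?dotp_ge0 // -sqrtr_sqr.
by rewrite ler_sqrt ?mulr_ge0 ?dotp_ge0 // CS_sq.
Qed.

Lemma CS' u v : dotp u v <= enorm u * enorm v.
Proof. exact: le_trans (ler_norm _) (CS u v). Qed.

Lemma enorm_le_sq u v : dotp u u <= dotp v v -> enorm u <= enorm v.
Proof. by move=> h; rewrite /enorm ler_sqrt // dotp_ge0. Qed.

Lemma enorm_lt_sq u (e : R) : 0 <= e -> dotp u u < e ^+ 2 -> enorm u < e.
Proof.
move=> e0 h; rewrite /enorm -(ger0_norm e0) -sqrtr_sqr.
by rewrite ltr_sqrt // (le_lt_trans (dotp_ge0 u)).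
Qed.

Lemma enormD u v : enorm (u + v) <= enorm u + enorm v.
Proof.
rewrite /enorm -[X in _ <= X]ger0_norm ?addr_ge0 ?sqrtr_ge0 // -sqrtr_sqr.
rewrite ler_sqrt ?sqr_ge0 //.
rewrite dotpDl !dotpDr (dotpC v u) sqrrD !sqr_sqrtr ?dotp_ge0 //.
have := CS' u v; rewrite /enorm => h; lra.
Qed.

Lemma enormZ (c : R) u : enorm (c *: u) = `|c| * enorm u.
Proof. by rewrite /enorm dotpZl dotpZr mulrA -expr2 sqrtrM ?sqr_ge0 // sqrtr_sqr. Qed.

Lemma enormN u : enorm (- u) = enorm u.
Proof. by rewrite -scaleN1r enormZ normrN1 mul1r. Qed.

Lemma enormB u v : enorm (u - v) = enorm (v - u).
Proof. by rewrite -enormN opprB. Qed.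

Lemma enorm0 : enorm (0 : 'rV[R]_d) = 0.
Proof. by rewrite /enorm dotp0l sqrtr0. Qed.

Lemma enorm_gt0 u : u != 0 -> 0 < enorm u.
Proof.
move=> un; rewrite lt_def enorm_ge0 andbT; apply/negP => /eqP h.
have : dotp u u = 0 by rewrite -enorm_sq h expr0n.
by move/dotp_eq0 => h'; move: un; rewrite h' eqxx.
Qed.

Lemma coord_le_mx u i : `|u 0 i| <= `|u|.
Proof.
rewrite [leRHS]/Num.norm /= mx_normrE; apply/bigmax_geP; right => /=.
by exists (0, i).
Qed.

Lemma mx_le_enorm u : `|u| <= enorm u.
Proof.
rewrite [leLHS]/Num.norm /= mx_normrE; apply/bigmax_leP; split => [|[i j] _ /=].
  exact: enorm_ge0.
rewrite (ord1 i) /enorm -sqrtr_sqr ler_sqrt ?dotp_ge0 //.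
exact: coord_le.
Qed.

Lemma enorm_le_mx u : dotp u u <= d%:R * `|u| ^+ 2.
Proof.
rewrite dotpE -[d in d%:R]card_ord -sum1_card natr_sum mulr_suml.
apply: ler_sum => i _; rewrite mul1r -expr2 -real_normK ?num_real //.
by rewrite lerXn2r ?nnegrE ?normr_ge0 // coord_le_mx.
Qed.


Lemma enorm_leE u v : enorm u <= enorm v -> dotp u u <= dotp v v.
Proof.
move=> h; rewrite -!enorm_sq; rewrite lerXn2r ?nnegrE ?enorm_ge0 //.
Qed.

Ltac dexp := rewrite ?(dotpDl, dotpDr, dotpNl, dotpNr, dotpZl, dotpZr, dotpBl, dotpBr).

Lemma tseng_step (z w p Fz Fw : 'rV[R]_d) (lam : R) :
  dotp (z - lam *: Fz - w) (p - w) <= 0 -> 0 <= lam -> 0 <= dotp Fw (w - p) ->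
  dotp (w + lam *: (Fz - Fw) - p) (w + lam *: (Fz - Fw) - p) <=
  dotp (z - p) (z - p) - dotp (z - w) (z - w) + lam ^+ 2 * dotp (Fz - Fw) (Fz - Fw).
Proof.
move=> h1 hl h2; have h3 := mulr_ge0 hl h2.
move: h1 h3; dexp.
rewrite ?(dotpC w z) ?(dotpC p z) ?(dotpC p w) ?(dotpC Fz z) ?(dotpC Fw z)
  ?(dotpC Fz w) ?(dotpC Fw w) ?(dotpC Fz p) ?(dotpC Fw p) ?(dotpC Fw Fz).
move=> h1 h3.
nra.
Qed.

Lemma proj_ineq (C : set 'rV[R]_d) (y w : 'rV[R]_d) : convex_setH C -> is_proj C y w ->
  forall v, C v -> dotp (y - w) (v - w) <= 0.
Proof.
move=> cC [Cw hw] v Cv.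
have key : forall s : R, 0 < s <= 1 ->
    2 * dotp (y - w) (v - w) <= s * dotp (v - w) (v - w).
  move=> s /andP[s0 s1].
  have Cu : C (s *: v + (1 - s) *: w) by apply: cC => //; rewrite (ltW s0) s1.
  have := enorm_leE (hw _ Cu).
  have -> : y - (s *: v + (1 - s) *: w) = (y - w) - s *: (v - w).
    by apply/rowP => i; rewrite !mxE; ring.
  rewrite !(dotpBl, dotpBr, dotpZl, dotpZr) ?(dotpC w y) ?(dotpC v y) ?(dotpC w v) => h.
  have : 0 <= s * (s * (dotp v v - dotp v w - (dotp v w - dotp w w))
     - 2 * (dotp y v - dotp y w - (dotp v w - dotp w w))) by nra.
  rewrite pmulr_rge0 // subr_ge0 => h'; lra.
set a := dotp (y - w) (v - w); set b := dotp (v - w) (v - w).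
rewrite leNgt; apply/negP => a0.
have b0 : 0 <= b by apply: dotp_ge0.
set s := Num.min 1 (a / (b + 1)).
have s0 : 0 < s by rewrite lt_min ltr01 divr_gt0 // ltr_pwDr.
have s1 : s <= 1 by rewrite ge_min lexx.
have := key s; rewrite s0 s1 => /(_ isT) h.
have : s * b <= a / (b + 1) * b by rewrite ler_wpM2r // ge_min lexx orbT.
have : a / (b + 1) * b < a.
  rewrite mulrAC ltr_pdivrMr ?ltr_pwDr //; nra.
rewrite -/a -/b in h; move=> h1 h2; lra.
Qed.

Lemma proj_nonexp (C : set 'rV[R]_d) (y w p : 'rV[R]_d) : convex_setH C ->
  is_proj C y w -> C p -> enorm (w - p) <= enorm (y - p).
Proof.
move=> cC hp Cp; have := proj_ineq cC hp Cp.
apply: contraTT; rewrite -!ltNge => h.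
have : dotp (y - p) (y - p) < dotp (w - p) (w - p).
  by rewrite -!enorm_sq ltrXn2r ?nnegrE ?enorm_ge0.
have -> : y - p = (y - w) + (w - p) by rewrite addrA subrK.
have -> : p - w = - (w - p) by rewrite opprB.
have := dotp_ge0 (y - w).
move: (y - w) (w - p) => A B.
rewrite !(dotpDl, dotpDr) (dotpC B A) dotpNr; lra.
Qed.

Lemma growth (F : 'rV[R]_d -> 'rV[R]_d) : unif_continuousH F ->
  exists2 del : R, 0 < del & forall x y, enorm (F x - F y) <= 1 + enorm (x - y) / del.
Proof.
move=> /(_ 1 ltr01) [del del0 hdel]; exists del => // x y.
have ind : forall N : nat, forall x y, enorm (x - y) < N.+1%:R * del ->
    enorm (F x - F y) < N.+1%:R.
  elim => [|N IH] {}x {}y.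
    by rewrite mul1r => /hdel.
  move=> hxy.
  set k : R := N.+2%:R.
  have k0 : 0 < k by rewrite ltr0n.
  set m := x + k^-1 *: (y - x).
  have h1 : enorm (x - m) < del.
    rewrite /m opprD addrA subrr add0r enormN enormZ ger0_norm ?invr_ge0 ?ltW //.
    by rewrite enormB mulrC ltr_pdivrMr // mulrC.
  have h2 : enorm (m - y) < N.+1%:R * del.
    have -> : m - y = (1 - k^-1) *: (x - y).
      by apply/rowP => i; rewrite /m !mxE; ring.
    rewrite enormZ ger0_norm; last first.
      by rewrite subr_ge0 invf_le1 // /k ler1n.
    have -> : 1 - k^-1 = N.+1%:R / k.
      rewrite /k; field; by rewrite gt_eqF.
    rewrite mulrAC ltr_pdivrMr // -mulrA ltr_pM2l ?ltr0n //.
    by rewrite mulrC.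
  have := enormD (F x - F m) (F m - F y).
  have -> : F x - F m + (F m - F y) = F x - F y by rewrite addrA subrK.
  have := hdel _ _ h1; have := IH _ _ h2.
  rewrite /k -(natr1 N.+1) => a b c; lra.
have hn : 0 <= enorm (x - y) / del by rewrite divr_ge0 ?enorm_ge0 ?ltW.
have hl := truncn_le (enorm (x - y) / del); rewrite hn in hl.
have hs := truncnS_gt (enorm (x - y) / del).
have := ind (Num.truncn (enorm (x - y) / del)) x y.
rewrite -ltr_pdivrMr // => /(_ hs).
move: hl; rewrite -natr1 => hl h; lra.
Qed.

Lemma near_dot (F : 'rV[R]_d -> 'rV[R]_d) : unif_continuousH F ->
  forall x y (eta : R), 0 < eta -> exists2 del : R, 0 < del &
  forall x' y', enorm (x' - x) < del -> enorm (y' - y) < del ->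
    `|dotp (F x') y' - dotp (F x) y| < eta.
Proof.
move=> uc x y eta eta0.
set ny := enorm y; set nf := enorm (F x).
have ny0 : 0 <= ny by apply: enorm_ge0.
have nf0 : 0 <= nf by apply: enorm_ge0.
have eps0 : 0 < eta / (2 * (ny + 1)) by rewrite divr_gt0 // mulr_gt0 // ltr_pwDr.
have [d0 d00 hd0] := uc _ eps0.
exists (Num.min d0 (Num.min 1 (eta / (2 * (nf + 1))))).
  by rewrite !lt_min d00 ltr01 divr_gt0 // mulr_gt0 // ltr_pwDr.
move=> x' y'; rewrite !lt_min => /and3P[hx _ _] /and3P[_ hy1 hy2].
have hF : enorm (F x' - F x) < eta / (2 * (ny + 1)) by apply: hd0.
have -> : dotp (F x') y' - dotp (F x) y =
    dotp (F x' - F x) y' + dotp (F x) (y' - y).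
  by rewrite dotpBl dotpBr addrA subrK.
apply: le_lt_trans (ler_normD _ _) _.
have c1 := CS (F x' - F x) y'.
have c2 := CS (F x) (y' - y).
have ey : enorm y' <= ny + 1.
  have := enormD (y' - y) y; rewrite subrK -/ny => h; lra.
have t1 : enorm (F x' - F x) * enorm y' <= eta / (2 * (ny + 1)) * (ny + 1).
  apply: ler_pM => //; [exact: enorm_ge0 | exact: enorm_ge0 | exact: ltW].
have t2 : nf * enorm (y' - y) <= nf * (eta / (2 * (nf + 1))).
  by apply: ler_wpM2l => //; apply: ltW.
have e1 : eta / (2 * (ny + 1)) * (ny + 1) = eta / 2.
  field; rewrite gt_eqF // ltr_pwDr //. 
have e2 : nf * (eta / (2 * (nf + 1))) < eta / 2.
  rewrite mulrA ltr_pdivrMr ?mulr_gt0 ?ltr_pwDr //; nra.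
rewrite -/nf in c2; lra.
Qed.

Lemma qm_dual (C : set 'rV[R]_d) (F : 'rV[R]_d -> 'rV[R]_d) p :
  quasimonotone F -> unif_continuousH F -> VI_sol C F p -> F p != 0 ->
  VI_dual_sol C F p.
Proof.
move=> qm uc [Cp hp] Fp0; split => // v Cv.
rewrite leNgt; apply/negP => hneg.
set eta := - dotp (F v) (v - p).
have eta0 : 0 < eta by rewrite oppr_gt0.
have [del del0 hdel] := near_dot uc v (v - p) eta0.
have nF0 := enorm_gt0 Fp0.
set t := del / (2 * (enorm (F p) + 1)).
have h2 : 0 < 2 * (enorm (F p) + 1) by lra.
have t0 : 0 < t by rewrite divr_gt0.
set v' := v + t *: F p.
have hv : enorm (v' - v) < del.
  rewrite /v' addrC addKr enormZ ger0_norm ?ltW // /t.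
  rewrite mulrAC ltr_pdivrMr ?mulr_gt0 ?ltr_pwDr //; nra.
have hv2 : enorm ((v' - p) - (v - p)) < del.
  by have -> : (v' - p) - (v - p) = v' - v by apply/rowP => i; rewrite !mxE; ring.
have pos : 0 < dotp (F p) (v' - p).
  have -> : v' - p = (v - p) + t *: F p by apply/rowP => i; rewrite /v' !mxE; ring.
  rewrite dotpDr dotpZr; have := hp _ Cv.
  have : 0 < dotp (F p) (F p) by rewrite -enorm_sq exprn_gt0.
  move=> a b; have := mulr_gt0 t0 a; lra.
have := qm _ _ pos.
have := hdel _ _ hv hv2; rewrite ltr_norml => /andP[a b].
rewrite /eta in a b; lra.
Qed.

End Basics.

Section Topo.
Variables (R : realType) (d : nat).

Lemma near_oo (P : nat -> Prop) : (exists N, forall n, (N <= n)%N -> P n) ->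
  \forall n \near \oo, P n.
Proof. by case=> N hN; exists N => // n /= /hN. Qed.

Lemma oo_near (P : nat -> Prop) : (\forall n \near \oo, P n) ->
  exists N, forall n, (N <= n)%N -> P n.
Proof. by case=> N _ hN; exists N => n hn; apply: hN. Qed.

Lemma small_mx (e : R) : 0 < e -> exists2 e' : R, 0 < e' &
  forall u : 'rV[R]_d, `|u| < e' -> enorm u < e.
Proof.
move=> e0; exists (e / (d%:R + 1)); first by rewrite divr_gt0 // ltr_wpDl.
move=> u hu; apply: enorm_lt_sq; first exact: ltW.
apply: le_lt_trans (enorm_le_mx u) _.
have d0 : 0 <= (d%:R : R) by [].
have hu0 : 0 <= `|u| by [].
have h : `|u| * (d%:R + 1) < e by rewrite -ltr_pdivlMr ?ltr_wpDl.
have h1 : 0 < (e - `|u| * (d%:R + 1)) * (e + `|u| * (d%:R + 1)).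
  apply: mulr_gt0; [lra | nra].
have h2 : 0 <= `|u| ^+ 2 * (d%:R ^+ 2 + d%:R + 1).
  by apply: mulr_ge0; [apply: sqr_ge0 | nra].
nra.
Qed.

Lemma closed_seq (C : set 'rV[R]_d) x : closed C ->
  (forall e : R, 0 < e -> exists c, C c /\ enorm (c - x) < e) -> C x.
Proof.
move=> /closure_id cE h; rewrite cE => B /nbhs_ballP [e /= e0 he].
have [c [Cc hc]] := h e e0.
exists c; split => //; apply: he.
rewrite mx_norm_ball /ball_ /=.
apply: le_lt_trans (mx_le_enorm _) _.
by rewrite enormB.
Qed.

Lemma cluster_seq (u : nat -> 'rV[R]_d) p0 (B : R) :
  (forall k, enorm (u k - p0) <= B) ->
  exists zb, forall e : R, 0 < e -> forall N, exists2 k, (N <= k)%N & enorm (u k - zb) < e.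
Proof.
move=> hB.
set K := closed_ball_ (fun x : 'rV[R]_d => `|x|) p0 B.
have Kc : closed K by apply: closed_closed_ball_.
have Kb : bounded_set K.
  rewrite /= /bounded_near.
  apply: filterS (nbhs_pinfty_ge (num_real (`|p0| + B))) => M hM x.
  rewrite /K /closed_ball_ /= => hx.
  have h : `|x| <= `|p0| + `|p0 - x|.
    by have := ler_normD p0 (x - p0); rewrite (addrC p0 (x - p0)) subrK distrC.
  apply: le_trans h _; apply: le_trans (lerD (lexx _) hx) _ => //.
have Kcomp := bounded_closed_compact Kb Kc.
have uK : forall k, K (u k).
  move=> k; rewrite /K /closed_ball_ /=; apply: le_trans (mx_le_enorm _) _.
  by rewrite enormB.
have uKF : (u @ \oo) K by exists 0%N => // n _; exact: uK.
have [zb [Kzb clz]] := Kcomp (u @ \oo) _ uKF.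
exists zb => e e0 N.
have [e' e'0 he'] := small_mx e0.
have hA : (u @ \oo) (u @` [set k | (N <= k)%N]).
  by exists N => [//|n /= hn]; exists n.
have hBn : nbhs zb (ball zb e') by apply: nbhsx_ballx.
have [_ [[k /= hk <-] hb]] := clz _ _ hA hBn.
exists k => //; apply: he'.
by move: hb; rewrite mx_norm_ball /ball_ /= => h; rewrite -normrN opprB.
Unshelve. all: by end_near.
Qed.

End Topo.

Section Main.
Variables (R : realType) (d : nat) (C : set 'rV[R]_d)
  (F : 'rV[R]_d -> 'rV[R]_d) (mu : R) (xi : nat -> R)
  (z w : nat -> 'rV[R]_d) (lam : nat -> R).
Hypotheses (Cne : C !=set0) (Ccl : closed C) (Ccv : convex_setH C)
  (SDne : VI_dual_sol C F !=set0) (qm : quasimonotone F)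
  (uc : unif_continuousH F)
  (hS : forall x, VI_sol C F x -> ~ VI_dual_sol C F x -> F x != 0)
  (hmu : 0 < mu < 1) (xi0 : forall n, 0 <= xi n) (xicv : cvgn (series xi))
  (lam0 : 0 < lam 0%N) (alg : alg31 C F mu xi z w lam) (zw : forall n, z n != w n).

Let t n := enorm (z n - w n).
Let g n := enorm (F (z n) - F (w n)).

Lemma mu0 : 0 < mu. Proof. by case/andP: hmu. Qed.
Lemma mu1 : mu < 1. Proof. by case/andP: hmu. Qed.

Lemma alg_proj n : is_proj C (z n - lam n *: F (z n)) (w n).
Proof. by case: (alg n). Qed.
Lemma alg_z n : z n.+1 = w n + lam n *: (F (z n) - F (w n)).
Proof. by case: (alg n) => _ []. Qed.
Lemma alg_lam n : lam n.+1 = (if F (z n) != F (w n)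
                then Num.min (mu * enorm (z n - w n) / enorm (F (z n) - F (w n)))
                             (lam n + xi n)
                else lam n + xi n).
Proof. by case: (alg n) => _ []. Qed.

Lemma Cw n : C (w n). Proof. by case: (alg_proj n). Qed.

Lemma t_gt0 n : 0 < t n.
Proof. by apply: enorm_gt0; rewrite subr_eq0 zw. Qed.

Lemma g_ge0 n : 0 <= g n. Proof. exact: enorm_ge0. Qed.
Lemma t_ge0 n : 0 <= t n. Proof. exact: enorm_ge0. Qed.

Lemma lam_pos n : 0 < lam n.
Proof.
elim: n => // n IH; rewrite alg_lam; case: ifP => h.
  rewrite lt_min; apply/andP; split.
    rewrite divr_gt0 ?mulr_gt0 ?mu0 //; first exact: t_gt0.
    by apply: enorm_gt0; rewrite subr_eq0.
  by rewrite ltr_wpDr.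
by rewrite ltr_wpDr.
Qed.

Lemma lam_g n : lam n.+1 * g n <= mu * t n.
Proof.
rewrite alg_lam; case: ifP => h.
  have g0 : 0 < g n by apply: enorm_gt0; rewrite subr_eq0.
  by rewrite -ler_pdivlMr // ge_min lexx.
move/negbFE/eqP: h => h; rewrite /g h subrr enorm0 mulr0.
by rewrite mulr_ge0 ?t_ge0 // ltW // mu0.
Qed.

Lemma lam_up n : lam n.+1 <= lam n + xi n.
Proof. by rewrite alg_lam; case: ifP => _ //; rewrite ge_min lexx orbT. Qed.

Lemma lam_dec n : lam n.+1 < lam n -> lam n.+1 * g n = mu * t n.
Proof.
rewrite alg_lam -/(t n) -/(g n); case: ifP => h; last by have := xi0 n; lra.
have g0 : 0 < g n by apply: enorm_gt0; rewrite subr_eq0.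
set m := Num.min _ _.
case: (leP (mu * t n / g n) (lam n + xi n)) => hab.
  have -> : m = mu * t n / g n by rewrite /m; apply: min_l.
  by move=> _; rewrite divfK // gt_eqF.
have -> : m = lam n + xi n by rewrite /m; apply: min_r; apply: ltW.
by have := xi0 n; lra.
Qed.

Let Sx := limn (series xi).

Lemma ser_le n : series xi n <= Sx.
Proof.
apply: nondecreasing_cvgn_le => //.
exact: (@nondecreasing_series _ xi predT 0%N (fun k _ _ => xi0 k)).
Qed.

Lemma Sx_ge0 : 0 <= Sx.
Proof. by apply: le_trans (ser_le 0); rewrite /series /= big_geq. Qed.

Lemma lam_le_ser n : lam n <= lam 0%N + series xi n.
Proof.
elim: n => [|n IH]; first by rewrite /series /= big_geq // addr0.
by rewrite seriesSr; have := lam_up n; lra.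
Qed.

Let Lam := lam 0%N + Sx.

Lemma lam_le n : lam n <= Lam.
Proof. by have := lam_le_ser n; have := ser_le n; rewrite /Lam; lra. Qed.

Let th := (1 + mu) / 2.
Lemma th_lt1 : th < 1. Proof. by rewrite /th; have := mu1; lra. Qed.
Lemma th_gt0 : 0 < th. Proof. by rewrite /th; have := mu0; lra. Qed.
Lemma mu_lt_th : mu < th. Proof. by rewrite /th; have := mu1; lra. Qed.

Let Dn n := lam n.+1 < th * lam n.
Let Dsum N := \sum_(k < N) (if Dn k then lam k else 0).

Lemma DsumS N : Dsum N.+1 = Dsum N + (if Dn N then lam N else 0).
Proof. by rewrite /Dsum big_ord_recr. Qed.

Lemma Dsum_ge0 N : 0 <= Dsum N.
Proof. by apply: sumr_ge0 => k _; case: ifP => // _; apply: ltW; apply: lam_pos. Qed.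

Lemma Dsum_mono m n : (m <= n)%N -> Dsum m <= Dsum n.
Proof.
move=> /subnK <-; elim: (n - m)%N => [|k IH]; first by rewrite add0n.
rewrite addSn DsumS; apply: le_trans IH _; rewrite lerDl.
by case: ifP => // _; apply: ltW; apply: lam_pos.
Qed.

Lemma Dsum_bound N : lam N + (1 - th) * Dsum N <= lam 0%N + series xi N.
Proof.
elim: N => [|N IH].
  rewrite /Dsum big_ord0 mulr0 addr0 lerDl.
  by rewrite seriesEord /= big_ord0.
rewrite DsumS seriesSr; have := xi0 N; have := lam_up N.
rewrite /Dn; case: ifP => hD.
  move=> h1 h2; lra.
by move=> h1 h2; rewrite addr0; lra.
Qed.

Lemma Dsum_le N : Dsum N <= Lam / (1 - th).
Proof.
rewrite ler_pdivlMr ?subr_gt0 ?th_lt1 // mulrC.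
have := Dsum_bound N; have := ser_le N; have := lam_pos N; rewrite /Lam; lra.
Qed.

Let ka := mu / th.
Lemma ka_ge0 : 0 <= ka. Proof. by rewrite /ka divr_ge0 // ltW ?mu0 ?th_gt0. Qed.
Lemma ka_lt1 : ka < 1. Proof. by rewrite /ka ltr_pdivrMr ?th_gt0 // mul1r mu_lt_th. Qed.

Lemma notD_bound n : ~~ Dn n -> lam n * g n <= ka * t n.
Proof.
rewrite /Dn -leNgt => h.
rewrite /ka mulrAC ler_pdivlMr ?th_gt0 //.
apply: le_trans (lam_g n); rewrite mulrAC.
by apply: ler_wpM2r => //; [exact: g_ge0 | rewrite mulrC].
Qed.

Lemma fejer p n : VI_dual_sol C F p ->
  dotp (z n.+1 - p) (z n.+1 - p) <=
  dotp (z n - p) (z n - p) - t n ^+ 2 + lam n ^+ 2 * g n ^+ 2.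
Proof.
move=> [Cp hp]; rewrite alg_z /t /g !enorm_sq.
apply: tseng_step.
- exact: (proj_ineq Ccv (alg_proj n) Cp).
- exact: ltW (lam_pos n).
- exact: hp (Cw n).
Qed.


Lemma g_bound p : C p -> exists2 K : R, 0 < K &
  forall n, g n <= K * (1 + enorm (z n - p)).
Proof.
move=> Cp; have [del del0 hdel] := growth uc.
set A := enorm (F p).
have A0 : 0 <= A by apply: enorm_ge0.
have L0 : 0 <= Lam by apply: le_trans (lam_le 0); apply: ltW; apply: lam_pos.
exists (1 + (2 + Lam * (A + 1) + Lam / del) / del).
  by rewrite ltr_wpDr // divr_ge0 ?(ltW del0) // addr_ge0 ?divr_ge0 ?(ltW del0) // addr_ge0 // mulr_ge0 // addr_ge0.
move=> n; set b := enorm (z n - p).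
have b0 : 0 <= b by apply: enorm_ge0.
have h1 : enorm (F (z n)) <= A + 1 + b / del.
  have := enormD (F (z n) - F p) (F p); rewrite subrK.
  have := hdel (z n) p; rewrite -/b -/A; lra.
have h2 : enorm (w n - p) <= b + Lam * (A + 1 + b / del).
  apply: le_trans (proj_nonexp Ccv (alg_proj n) Cp) _.
  have -> : z n - lam n *: F (z n) - p = (z n - p) + (- lam n) *: F (z n).
    by apply/rowP => i; rewrite !mxE; ring.
  apply: le_trans (enormD _ _) _; rewrite enormZ normrN gtr0_norm ?lam_pos //.
  rewrite -/b lerD2l; apply: ler_pM => //; [exact: ltW (lam_pos n) | exact: enorm_ge0 | exact: lam_le].
have h3 : t n <= b + enorm (w n - p).
  rewrite /t; have -> : z n - w n = (z n - p) + - (w n - p) by rewrite opprB addrA subrK.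
  by apply: le_trans (enormD _ _) _; rewrite enormN.
have h4 : g n <= 1 + t n / del by apply: hdel.
have e1 : Lam * (A + 1 + b / del) = Lam * (A + 1) + Lam / del * b.
  by rewrite mulrDr; congr (_ + _); rewrite mulrA mulrAC.
have h5 : t n / del <= (2 * b + Lam * (A + 1) + Lam / del * b) / del.
  by rewrite ler_pM2r ?invr_gt0 //; lra.
apply: le_trans h4 _.
have e2 : (2 * b + Lam * (A + 1) + Lam / del * b) / del =
  (Lam * (A + 1)) / del + (2 + Lam / del) / del * b.
  by rewrite !mulrDl; field; rewrite gt_eqF.
have e3 : (1 + (2 + Lam * (A + 1) + Lam / del) / del) * (1 + b) =
  1 + (2 + Lam * (A + 1) + Lam / del) / del + b +
  (2 + Lam / del) / del * b + (Lam * (A + 1)) / del * b.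
  by field; rewrite gt_eqF.
have h6 : 0 <= (Lam * (A + 1)) / del * b.
  by rewrite mulr_ge0 // divr_ge0 ?(ltW del0) // mulr_ge0 // addr_ge0.
have h7 : 0 <= (2 + Lam / del) / del.
  by rewrite divr_ge0 ?(ltW del0) // addr_ge0 // divr_ge0 ?(ltW del0).
rewrite e3; move: h5; rewrite e2.
have : (Lam * (A + 1)) / del <= (2 + Lam * (A + 1) + Lam / del) / del.
  rewrite ler_pM2r ?invr_gt0 //; have : 0 <= Lam / del by rewrite divr_ge0 // ltW.
  lra.
lra.
Qed.


Let q p n := dotp (z n - p) (z n - p).

Definition master p c := forall n, q p n.+1 <= q p n
     + (if Dn n then c * lam n * (1 + q p n) else 0)
     - (if Dn n then 0 else (1 - ka ^+ 2) * t n ^+ 2).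

Lemma q_ge0 p n : 0 <= q p n. Proof. exact: dotp_ge0. Qed.

Lemma pack p : VI_dual_sol C F p -> exists2 c : R, 0 <= c & master p c.
Proof.
move=> hp; have [Cp _] := hp.
have [K K0 hK] := g_bound Cp.
have L0 : 0 <= Lam by apply: le_trans (lam_le 0); apply: ltW; apply: lam_pos.
exists (2 * Lam * K ^+ 2); first by rewrite !mulr_ge0 // ltW.
move=> n; have f := fejer n hp; rewrite /q.
have l0 := lam_pos n; have g0 := g_ge0 n; have t0 := t_ge0 n.
case hD : (Dn n).
  set b := enorm (z n - p).
  have b0 : 0 <= b by apply: enorm_ge0.
  have hq : dotp (z n - p) (z n - p) = b ^+ 2 by rewrite enorm_sq.
  have hg : g n ^+ 2 <= (K * (1 + b)) ^+ 2.
    by rewrite lerXn2r ?nnegrE ?mulr_ge0 ?addr_ge0 ?(ltW K0) //; apply: hK.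
  have hb : (1 + b) ^+ 2 <= 2 * (1 + b ^+ 2).
    have := sqr_ge0 (1 - b); rewrite sqrrB sqrrD; lra.
  have hg2 : g n ^+ 2 <= 2 * K ^+ 2 * (1 + b ^+ 2).
    apply: le_trans hg _; rewrite exprMn.
    have := ler_wpM2l (sqr_ge0 K) hb; nra.
  have hl2 : lam n ^+ 2 <= lam n * Lam by rewrite expr2; apply: ler_wpM2l; [exact: ltW | exact: lam_le].
  have hprod : lam n ^+ 2 * g n ^+ 2 <= (lam n * Lam) * (2 * K ^+ 2 * (1 + b ^+ 2)).
    by apply: ler_pM => //; [exact: sqr_ge0 | exact: sqr_ge0].
  have e : lam n * Lam * (2 * K ^+ 2 * (1 + b ^+ 2)) = 2 * Lam * K ^+ 2 * lam n * (1 + b ^+ 2).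
    by ring.
  rewrite hq in f *; rewrite subr0; have := sqr_ge0 (t n); lra.
have hn : ~~ Dn n by rewrite hD.
have h1 := notD_bound hn.
have h2 : lam n ^+ 2 * g n ^+ 2 <= ka ^+ 2 * t n ^+ 2.
  rewrite -!exprMn; have := mulr_ge0 (ltW l0) g0; nra.
rewrite /= addr0; lra.
Qed.

Lemma pack_bound p c : 0 <= c -> master p c ->
  forall n, 1 + q p n <= (1 + q p 0%N) * expR (c * Dsum n).
Proof.
move=> c0 hm; elim => [|n IH].
  by rewrite /Dsum big_ord0 mulr0 expR0 mulr1.
have := hm n; rewrite DsumS; case hD : (Dn n) => h.
  rewrite mulrDr expRD mulrA.
  have e1 : 1 + c * lam n <= expR (c * lam n) by apply: expR_ge1Dx.
  have hq0 := q_ge0 p n.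
  have cl0 : 0 <= c * lam n by rewrite mulr_ge0 // ltW // lam_pos.
  have : (1 + c * lam n) * (1 + q p n) <= expR (c * lam n) * ((1 + q p 0%N) * expR (c * Dsum n)).
    by apply: ler_pM => //; lra.
  rewrite subr0 in h; nra.
rewrite addr0.
have : 0 <= (1 - ka ^+ 2) * t n ^+ 2.
  rewrite mulr_ge0 ?sqr_ge0 // subr_ge0 expr_le1 ?ka_ge0 //; exact: ltW ka_lt1.
rewrite addr0 in h; lra.
Qed.

Lemma q_bounded p : VI_dual_sol C F p -> exists Q, forall n, q p n <= Q.
Proof.
move=> /pack [c c0 hm]; exists ((1 + q p 0%N) * expR (c * (Lam / (1 - th)))) => n.
have := pack_bound c0 hm n.
have : expR (c * Dsum n) <= expR (c * (Lam / (1 - th))).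
  by rewrite ler_expR ler_wpM2l // Dsum_le.
have := q_ge0 p 0%N.
move=> h0 h1 h2.
have : (1 + q p 0%N) * expR (c * Dsum n) <= (1 + q p 0%N) * expR (c * (Lam / (1 - th))).
  by rewrite ler_wpM2l //; lra.
lra.
Qed.


Lemma min_pos (a b : R) : 0 < a -> 0 < b -> exists2 r, 0 < r & r <= a /\ r <= b.
Proof.
move=> a0 b0; exists (a * b / (a + b)); first by rewrite divr_gt0 ?mulr_gt0 ?addr_gt0.
split; rewrite ler_pdivrMr ?addr_gt0 //; nra.
Qed.

Lemma g_unif : exists2 G, 0 < G & forall n, g n <= G.
Proof.
have [p0 hp0] := SDne; have [Cp0 _] := hp0.
have [K K0 hK] := g_bound Cp0.
have [Q hQ] := q_bounded hp0.
exists (K * (2 + Q)).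
  by rewrite mulr_gt0 // (lt_le_trans _ (lerD (lexx 2) (le_trans (q_ge0 p0 0) (hQ 0%N)))) // addr0.
move=> n; apply: le_trans (hK n) _; rewrite ler_wpM2l ?(ltW K0) //.
set b := enorm (z n - p0).
have b0 : 0 <= b by apply: enorm_ge0.
have : b ^+ 2 <= Q by rewrite enorm_sq; apply: hQ.
nra.
Qed.

Lemma dec_exists N m : (N <= m)%N -> lam m < lam N ->
  exists n, [/\ (N <= n)%N, (n < m)%N, lam n.+1 < lam n & lam n.+1 <= lam m].
Proof.
elim: m => [|m IH]; first by rewrite leqn0 => /eqP ->; rewrite ltxx.
rewrite leq_eqVlt => /orP[/eqP ->|hN]; first by rewrite ltxx.
move=> hlt; case: (ltP (lam m.+1) (lam m)) => h.
  by exists m; split => //.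
have [n [h1 h2 h3 h4]] := IH hN (le_lt_trans h hlt).
by exists n; split => //; [exact: ltnW h2 | exact: le_trans h4 h].
Qed.


Lemma caseA (c : R) N1 : 0 < c -> (forall n, (N1 <= n)%N -> c <= lam n) ->
  exists N2, forall n, (N2 <= n)%N -> ~~ Dn n.
Proof.
move=> c0 hc; apply: contrapT => H.
have H' : forall N2, exists2 n, (N2 <= n)%N & Dn n.
  move=> N2; apply: contrapT => hc'; apply: H; exists N2 => n hn.
  by apply/negP => hD; apply: hc'; exists n.
have big : forall K : nat, exists M, K%:R * c <= Dsum M.
  elim => [|K [M hM]]; first by exists 0%N; rewrite mul0r Dsum_ge0.
  have [n hn hD] := H' (maxn M N1).
  exists n.+1; rewrite DsumS hD -natr1 mulrDl mul1r.
  have := Dsum_mono (leq_trans (leq_maxl M N1) hn).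
  have := hc n (leq_trans (leq_maxr M N1) hn); lra.
have [M hM] := big (Num.truncn (Lam / (1 - th) / c)).+1.
have := Dsum_le M.
have := truncnS_gt (Lam / (1 - th) / c).
rewrite ltr_pdivrMr // => h1 h2; lra.
Qed.

Lemma caseA2 (eps : R) N2 p : 0 < eps -> VI_dual_sol C F p ->
  (forall n, (N2 <= n)%N -> ~~ Dn n) ->
  forall N0, exists2 n, (N0 <= n)%N & t n < eps.
Proof.
move=> e0 hp hN2 N0; apply: contrapT => H.
have H' : forall n, (N0 <= n)%N -> eps <= t n.
  move=> n hn; rewrite leNgt; apply/negP => ht; apply: H; by exists n.
have [c c0 hm] := pack hp.
have [Q hQ] := q_bounded hp.
set M := maxn N0 N2.
have k0 : 0 < (1 - ka ^+ 2) * eps ^+ 2.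
  rewrite mulr_gt0 ?exprn_gt0 // subr_gt0 expr_lt1 ?ka_ge0 ?ka_lt1 //.
have dec : forall k : nat, q p (M + k)%N <= q p M - k%:R * ((1 - ka ^+ 2) * eps ^+ 2).
  elim => [|k IH]; first by rewrite addn0 mul0r subr0.
  have hn : ~~ Dn (M + k)%N by apply: hN2; exact: leq_trans (leq_maxr N0 N2) (leq_addr k M).
  have := hm (M + k)%N; rewrite (negbTE hn) addnS /= addr0 => h.
  have ht : eps <= t (M + k)%N by apply: H'; exact: leq_trans (leq_maxl N0 N2) (leq_addr k M).
  have : eps ^+ 2 <= t (M + k)%N ^+ 2 by have := t_ge0 (M + k)%N; nra.
  have ka2 : 0 <= 1 - ka ^+ 2 by rewrite subr_ge0 expr_le1 ?ka_ge0 // ltW ?ka_lt1.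
  rewrite -natr1 mulrDl mul1r => h2.
  have := ler_wpM2l ka2 h2; lra.
set k := (Num.truncn (Q / ((1 - ka ^+ 2) * eps ^+ 2))).+1.
have := dec k; have := q_ge0 p (M + k)%N; have := hQ M.
have := truncnS_gt (Q / ((1 - ka ^+ 2) * eps ^+ 2)).
rewrite ltr_pdivrMr // -/k => h1 h2 h3 h4; lra.
Qed.


Lemma good (eps : R) : 0 < eps -> forall N,
  exists2 n, (N <= n)%N & t n < eps * lam n /\ t n < eps.
Proof.
move=> e0 N.
have [p0 hp0] := SDne.
case: (pselect (exists c : R, 0 < c /\ exists N1, forall n, (N1 <= n)%N -> c <= lam n)).
  case=> c [c0 [N1 hN1]].
  have [N2 hN2] := caseA c0 hN1.
  have [r r0 [r1 r2]] := min_pos (mulr_gt0 e0 c0) e0.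
  have [n hn ht] := caseA2 r0 hp0 hN2 (maxn N N1).
  exists n; first exact: leq_trans (leq_maxl N N1) hn.
  have := hN1 n (leq_trans (leq_maxr N N1) hn) => hl.
  have := ler_wpM2l (ltW e0) hl; lra.
move=> H.
have H' : forall c : R, 0 < c -> forall N1, exists2 n, (N1 <= n)%N & lam n < c.
  move=> c c0 N1; apply: contrapT => hc; apply: H; exists c; split => //.
  exists N1 => n hn; rewrite leNgt; apply/negP => hl; apply: hc; by exists n.
have [G G0 hG] := g_unif.
have me0 : 0 < mu * eps by rewrite mulr_gt0 ?mu0.
have [del del0 hdel] := uc me0.
have [r r0 [r1 r2]] := min_pos del0 e0.
have c0 : 0 < mu * r / (G + 1) by rewrite divr_gt0 ?mulr_gt0 ?mu0 ?addr_gt0.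
have [c' c'0 [c'1 c'2]] := min_pos c0 (lam_pos N).
have [m hm hlm] := H' c' c'0 N.
have [n [h1 h2 h3 h4]] := dec_exists hm (lt_le_trans hlm c'2).
exists n => //.
have hdec := lam_dec h3.
have hl := lam_pos n.+1.
have gn := hG n; have g0 := g_ge0 n.
have ht : mu * t n < mu * r.
  rewrite -hdec.
  have : lam n.+1 * g n <= lam n.+1 * G by apply: ler_wpM2l => //; exact: ltW.
  have : lam n.+1 * G < mu * r / (G + 1) * (G + 1).
    have : lam n.+1 < mu * r / (G + 1) by apply: le_lt_trans h4 (lt_le_trans hlm c'1).
    move=> hh; apply: le_lt_trans (_ : lam n.+1 * G <= lam n.+1 * (G + 1)) _.
      by apply: ler_wpM2l; [exact: ltW | rewrite lerDl].
    by rewrite ltr_pM2r ?addr_gt0.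
  rewrite divfK ?gt_eqF ?addr_gt0 //; lra.
have ht' : t n < r by rewrite -(ltr_pM2l mu0).
have hgn : g n < mu * eps by apply: hdel; apply: lt_le_trans ht' r1.
split; last by lra.
rewrite -(ltr_pM2l mu0) -hdec.
apply: le_lt_trans (_ : lam n.+1 * g n <= lam n * g n) _.
  by apply: ler_wpM2r => //; exact: ltW.
have -> : mu * (eps * lam n) = lam n * (mu * eps) by ring.
by rewrite ltr_pM2l ?lam_pos.
Qed.


Lemma inv_small (e : R) : 0 < e -> exists N : nat, N.+1%:R^-1 < e.
Proof.
move=> e0; exists (Num.truncn e^-1).
have := truncnS_gt e^-1; by rewrite invf_plt ?posrE ?ltr0n.
Qed.

Lemma inv_mono (N k : nat) : (N <= k)%N -> k.+1%:R^-1 <= N.+1%:R^-1 :> R.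
Proof. by move=> h; rewrite lef_pV2 ?posrE ?ltr0n // ler_nat ltnS. Qed.

Lemma two_gt0 : (0 : R) < 2. Proof. by []. Qed.

Lemma inv_pos (k : nat) : 0 < k.+1%:R^-1 :> R.
Proof. by rewrite invr_gt0 ltr0n. Qed.

Lemma final : exists2 zl, VI_sol C F zl &
    (fun n => enorm (z n - zl)) @ \oo --> (0 : R).
Proof.
have hex : forall k, exists n,
    (k <= n)%N /\ t n < k.+1%:R^-1 * lam n /\ t n < k.+1%:R^-1.
  move=> k; have [n hn [h1 h2]] := good (inv_pos k) k; by exists n.
have [nk hnk] := choice hex.
have [p0 hp0] := SDne.
have [Q hQ] := q_bounded hp0.
have hB : forall k, enorm (z (nk k) - p0) <= 1 + Q.
  move=> k; set b := enorm (z (nk k) - p0).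
  have b0 : 0 <= b by apply: enorm_ge0.
  have : b ^+ 2 <= Q by rewrite enorm_sq; apply: hQ.
  nra.
have [zb hzb] := cluster_seq hB.
have Czb : C zb.
  apply: closed_seq Ccl _ => e e0.
  have [N hN] := inv_small (divr_gt0 e0 two_gt0).
  have [k hk hk2] := hzb _ (divr_gt0 e0 two_gt0) N.
  exists (w (nk k)); split; first exact: Cw.
  have := enormD (w (nk k) - z (nk k)) (z (nk k) - zb).
  rewrite addrA subrK => h; apply: le_lt_trans h _.
  rewrite enormB; have [_ [_ h3]] := hnk k.
  have := inv_mono hk; rewrite /t in h3; move: h3 hN; move: (k.+1%:R^-1 : R) (N.+1%:R^-1 : R) => i1 i2 h3 hN hh.
  apply: le_lt_trans (lerD (le_trans (ltW h3) hh) (ltW hk2)) _; lra.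
have Szb : VI_sol C F zb.
  split => // v Cv.
  apply: contrapT => /negP; rewrite -ltNge => hneg.
  set eta := - dotp (F zb) (v - zb).
  have eta0 : 0 < eta by rewrite oppr_gt0.
  have [del del0 hdel] := near_dot uc zb (v - zb) (divr_gt0 eta0 two_gt0).
  set E := enorm (v - zb) + del.
  have E0 : 0 < E by rewrite /E ltr_wpDl ?enorm_ge0.
  have [r r0 [r1 r2]] := min_pos (divr_gt0 del0 two_gt0)
     (divr_gt0 eta0 (mulr_gt0 two_gt0 E0)).
  have [N hN] := inv_small r0.
  have [k hk hk2] := hzb _ (divr_gt0 del0 two_gt0) N.
  set n := nk k.
  have [_ [h1 h3]] := hnk k; rewrite -/n in h1 h3.
  have hik := inv_mono hk.
  have hx : enorm (z n - zb) < del by apply: lt_trans hk2 _; lra.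
  have hkr : k.+1%:R^-1 <= del / 2.
    by apply: le_trans hik _; apply: le_trans r1; exact: ltW.
  have hwz : enorm (zb - w n) < del.
    have -> : zb - w n = (zb - z n) + (z n - w n) by rewrite addrA subrK.
    apply: le_lt_trans (enormD _ _) _.
    apply: lt_le_trans (ltr_leD (_ : enorm (zb - z n) < del / 2) (_ : enorm (z n - w n) <= del / 2)) _.
    - by rewrite enormB.
    - by apply: ltW; apply: lt_le_trans h3 hkr.
    - lra.
  have hy : enorm ((v - w n) - (v - zb)) < del.
    by have -> : (v - w n) - (v - zb) = zb - w n by apply/rowP => i; rewrite !mxE; ring.
  have hd := hdel _ _ hx hy; rewrite ltr_norml in hd; case/andP: hd => hd1 hd2.
  have hproj := proj_ineq Ccv (alg_proj n) Cv.
  have e : z n - lam n *: F (z n) - w n = (z n - w n) - lam n *: F (z n).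
    by apply/rowP => i; rewrite !mxE; ring.
  rewrite e dotpBl dotpZl in hproj.
  have cs := CS' (- (z n - w n)) (v - w n).
  rewrite dotpNl enormN -/(t n) in cs.
  have hE : enorm (v - w n) <= E.
    have := enormD (v - zb) (zb - w n); rewrite addrA subrK => h.
    rewrite /E; lra.
  have tE : t n * enorm (v - w n) <= k.+1%:R^-1 * lam n * E.
    apply: ler_pM; [exact: t_ge0 | exact: enorm_ge0 | exact: ltW | exact: hE].
  have hl := lam_pos n.
  have key : - (k.+1%:R^-1 * E) <= dotp (F (z n)) (v - w n).
    rewrite -(ler_pM2l hl).
    apply: le_trans (_ : _ <= dotp (z n - w n) (v - w n)) _; last by rewrite -subr_le0.
    apply: le_trans (_ : _ <= - (t n * enorm (v - w n))) _; last by rewrite lerNl.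
    by rewrite mulrN lerN2 mulrA [lam n * _]mulrC.
  have : k.+1%:R^-1 * E <= eta / (2 * E) * E.
    by apply: ler_wpM2r; [exact: ltW | apply: le_trans hik _; apply: le_trans r2; exact: ltW].
  have -> : eta / (2 * E) * E = eta / 2 by field; rewrite gt_eqF.
  rewrite /eta in hd1 hd2 * => hh.
  have fin : forall X Y a : R, - a <= X -> a <= - Y / 2 -> X - Y < - Y / 2 -> False.
    by move=> X Y a; lra.
  exact: fin key hh hd2.
have SDzb : VI_dual_sol C F zb.
  case: (pselect (VI_dual_sol C F zb)) => // h.
  exact: qm_dual qm uc Szb (hS Szb h).
exists zb => //.
have [c c0 hm] := pack SDzb.
have [Qz hQz] := q_bounded SDzb.
have Qz0 : 0 <= Qz by apply: le_trans (hQz 0%N); apply: q_ge0.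
set c2 := c * (1 + Qz).
have c20 : 0 <= c2 by rewrite mulr_ge0 // addr_ge0.
have tail : forall m n, (m <= n)%N -> q zb n <= q zb m + c2 * (Dsum n - Dsum m).
  move=> m n /subnK <-; elim: (n - m)%N => [|j IH]; first by rewrite add0n subrr mulr0 addr0.
  rewrite addSn DsumS; have := hm (j + m)%N; have := hQz (j + m)%N.
  have := q_ge0 zb (j + m)%N.
  case: (Dn (j + m)%N) => /= h0 h1 h2.
    have : c * lam (j + m)%N * (1 + q zb (j + m)%N) <= c2 * lam (j + m)%N.
      rewrite /c2 mulrAC; apply: ler_wpM2r; first exact: ltW (lam_pos _).
      by apply: ler_wpM2l => //; lra.
    rewrite subr0 in h2; move=> h3; nra.
  have : 0 <= (1 - ka ^+ 2) * t (j + m)%N ^+ 2.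
    rewrite mulr_ge0 ?sqr_ge0 // subr_ge0 expr_le1 ?ka_ge0 //; exact: ltW ka_lt1.
  rewrite addr0 in h2 *; nra.
have Dcv : cvgn Dsum.
  apply: nondecreasing_is_cvgn; first by move=> a b hab; exact: Dsum_mono.
  by exists (Lam / (1 - th)) => _ [n _ <-]; exact: Dsum_le.
have Dle := nondecreasing_cvgn_le (fun a b hab => Dsum_mono hab) Dcv.
apply/cvgrPdist_lt => e e0.
have e2 : 0 < e ^+ 2 / (4 * (c2 + 1)) by rewrite divr_gt0 ?exprn_gt0 ?mulr_gt0 ?ltr_wpDl.
have Dl : Dsum @ \oo --> limn Dsum := Dcv.
have hnear := (cvgrPdist_lt _ _).1 Dl _ e2.
have [M hM] := oo_near (hnear _).
have [k hk hk2] := hzb _ (divr_gt0 e0 two_gt0) M.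
have [hkn _] := hnk k.
apply: near_oo; exists (nk k) => n hn.
rewrite sub0r normrN ger0_norm ?enorm_ge0 //.
apply: enorm_lt_sq; first exact: ltW.
have h1 := tail _ _ hn.
have hMk : (M <= nk k)%N by exact: leq_trans hk hkn.
have h2 := hM _ hMk.
have h3 := Dle n.
have hqk : q zb (nk k) < (e / 2) ^+ 2.
  by rewrite /q -enorm_sq ltrXn2r ?nnegrE ?enorm_ge0 ?ltW ?divr_gt0.
rewrite ger0_norm ?subr_ge0 // in h2.
have hD : c2 * (Dsum n - Dsum (nk k)) <= c2 * (e ^+ 2 / (4 * (c2 + 1))).
  apply: ler_wpM2l => //; lra.
have : c2 * (e ^+ 2 / (4 * (c2 + 1))) <= e ^+ 2 / 4.
  have -> : c2 * (e ^+ 2 / (4 * (c2 + 1))) = e ^+ 2 / 4 * (c2 / (c2 + 1)).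
    by field; rewrite gt_eqF // ltr_wpDl.
  have hc : c2 / (c2 + 1) <= 1 by rewrite ler_pdivrMr ?ltr_wpDl // mul1r lerDl.
  have e40 : 0 <= e ^+ 2 / 4 by rewrite divr_ge0 // sqr_ge0.
  by have := ler_wpM2l e40 hc; rewrite mulr1.
rewrite expr_div_n in hqk => hh.
apply: le_lt_trans h1 _; apply: lt_le_trans (ltr_leD hqk (le_trans hD hh)) _.
have : 0 <= e ^+ 2 by apply: sqr_ge0.
rewrite (_ : (2 : R) ^+ 2 = 4); last by rewrite expr2; lra.
lra.
Qed.

End Main.

Theorem theorem4p1 (R : realType) (d : nat) (C : set 'rV[R]_d)
  (F : 'rV[R]_d -> 'rV[R]_d) (mu : R) (xi : nat -> R)
  (z w : nat -> 'rV[R]_d) (lam : nat -> R) :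
  C !=set0 -> closed C -> convex_setH C ->
  VI_dual_sol C F !=set0 ->
  quasimonotone F ->
  unif_continuousH F ->
  weak_lsc_norm F ->
  (forall x, VI_sol C F x -> ~ VI_dual_sol C F x -> F x != 0) ->
  0 < mu < 1 ->
  (forall n, 0 <= xi n) -> cvgn (series xi) ->
  0 < lam 0%N ->
  alg31 C F mu xi z w lam ->
  (forall n, z n != w n) ->
  exists2 zl, VI_sol C F zl &
    (fun n => enorm (z n - zl)) @ \oo --> (0 : R).
Proof.
move=> Cne Ccl Ccv SDne qm uc _ hS hmu xi0 xicv lam0 alg zw.
exact: (final Ccl Ccv SDne qm uc hS hmu xi0 xicv lam0 alg zw).
Qed.
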